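(* Let $m\geq 0$ and $k\geq 1$ be integers and let $n$ be a nonnegative integer with $t(m,k)\leq n\leq t(m+1,k)-1$, where \[ t(s,k)= s\left(\left\lfloor \frac{s}{k}\right\rfloor +1\right)k-\binom{\lfloor s/k\rfloor +1}{2}k^2 . \] Then $b(n,k)=m$.
   Context: For a cell $u$ of the Young diagram of a partition $\lambda$, the hook length of $u$ is the number of cells $v$ of the diagram with $v=u$, or $v$ below $u$ in the same column, or $v$ to the right of $u$ in the same row. $\alpha_k(\lambda)$ is the number of cells of the Young diagram of $\lambda$ with hook length exactly $k$. $P(n)$ is the set of partitions of $n$ (with $P(0)$ containing only the empty partition), and $b(n,k)=\max\{\alpha_k(\lambda)\colon\lambda\in P(n)\}$. *)

(* Defs.v *)
From mathcomp Require Import all_boot.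
Set Implicit Arguments. Unset Strict Implicit. Unset Printing Implicit Defensive.

Definition is_partition (l : seq nat) : bool :=
  sorted geq l && all (fun r => 0 < r) l.

Definition partition_of (n : nat) (l : seq nat) : bool :=
  is_partition l && (sumn l == n).

(* Cells are (i, j) with i < size l (row) and j < nth 0 l i (column),
   0-indexed.  Hook length = (cells to the right) + (cells below) + 1. *)
Definition hook (l : seq nat) (i j : nat) : nat :=
  (nth 0 l i - j) + count (fun r => j < r) (drop i.+1 l).

Definition alpha (k : nat) (l : seq nat) : nat :=
  sumn [seq count (fun j => hook l i j == k) (iota 0 (nth 0 l i))
       | i <- iota 0 (size l)].

(* Every partition of n has at most n parts, each at most n, so it is
   encoded (after padding with zeros) by some f : 'I_n -> 'I_n.+1. *)
Definition seq_of_ffun (n : nat) (f : {ffun 'I_n -> 'I_n.+1}) : seq nat :=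
  [seq r <- [seq nat_of_ord (f i) | i <- enum 'I_n] | 0 < r].

Definition b (n k : nat) : nat :=
  \max_(f : {ffun 'I_n -> 'I_n.+1} | partition_of n (seq_of_ffun f))
     alpha k (seq_of_ffun f).

(* t(s,k) = s (floor(s/k)+1) k - binom(floor(s/k)+1, 2) k^2 (always >= 0). *)
Definition t (s k : nat) : nat :=
  s * (s %/ k + 1) * k - 'C(s %/ k + 1, 2) * k ^ 2.

(* Main.v *)
Require Import Defs.
From mathcomp Require Import all_boot zify ring.
Set Implicit Arguments. Unset Strict Implicit. Unset Printing Implicit Defensive.

Fixpoint beta (l : seq nat) : seq nat :=
  if l is x :: l' then (x + size l') :: beta l' else [::].

Definition cntg (j : nat) (s : seq nat) := count (fun y => j < y) s.

Lemma geq_trans' : transitive geq.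
Proof. move=> a b c /= h1 h2; exact: leq_trans h2 h1. Qed.

Lemma sorted_cons_all x s : sorted geq (x :: s) -> all (fun y => y <= x) s.
Proof. move=> /= h; have := order_path_min geq_trans' h. by []. Qed.

Lemma sorted_cons_tl x s : sorted geq (x :: s) -> sorted geq s.
Proof. move=> /= h; exact: path_sorted h. Qed.

Lemma size_beta l : size (beta l) = size l.
Proof. by elim: l => //= x l ->. Qed.

Lemma nth_beta l i : i < size l -> nth 0 (beta l) i = nth 0 l i + (size l - i.+1).
Proof.
elim: l i => //= x l IH [|i] hi /=; first by rewrite subSS subn0.
by rewrite IH.
Qed.

Lemma beta_lt x l : all (fun y => y <= x) l -> all (fun z => z < x + size l) (beta l).
Proof.
elim: l => //= y l IH /andP [hy hl]; apply/andP; split; first by lia.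
apply/allP => z hz; have := allP (IH hl) z hz; lia.
Qed.

Lemma beta_uniq l : sorted geq l -> uniq (beta l).
Proof.
elim: l => // x l IH hs. have hs2 := sorted_cons_tl hs. have ha := sorted_cons_all hs. simpl. rewrite (IH hs2) andbT. apply/negP => hin; have := allP (beta_lt ha) _ hin; lia.
Qed.

Lemma sumn_beta l : sumn (beta l) = sumn l + 'C(size l, 2).
Proof.
elim: l => //= x l ->; rewrite binS bin1; lia.
Qed.

Lemma all_le_nth x s i : all (fun y => y <= x) s -> nth 0 s i <= x.
Proof.
move=> h; case: (ltnP i (size s)) => hi; first exact: (allP h) _ (mem_nth 0 hi).
by rewrite nth_default.
Qed.

Lemma cnt_nth j s : sorted geq s -> forall i, (j < nth 0 s i) = (i < cntg j s).
Proof.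
rewrite /cntg; elim: s => [|x s IH] hs i /=; first by rewrite nth_nil.
have ha := sorted_cons_all hs; have IH' := IH (sorted_cons_tl hs).
case: (ltnP j x) => hjx.
  case: i => [|i] /=; first by rewrite hjx.
  by rewrite IH' add1n ltnS.
have c0 : count (fun y => j < y) s = 0.
  apply/eqP; rewrite -leqn0 leqNgt -has_count; apply/hasP => -[y hy hjy].
  have := (allP ha) y hy; lia.
rewrite c0 /=; case: i => [|i] /=; first by lia.
have := all_le_nth i ha; lia.
Qed.

Lemma cnt_le j s : cntg j s <= size s.
Proof. exact: count_size. Qed.

Lemma cnt_anti j j' s : j <= j' -> cntg j' s <= cntg j s.
Proof. move=> h; apply: sub_count => y /= hy; lia. Qed.

Lemma count_mem_iota t B : uniq t -> all (fun y => y < B) t ->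
  count (fun y => y \in t) (iota 0 B) = size t.
Proof.
move=> ut hB; rewrite -size_filter; apply: perm_size; apply: uniq_perm => //.
  exact: filter_uniq (iota_uniq 0 B).
move=> y; rewrite mem_filter mem_iota /= add0n.
case hy: (y \in t) => //=; exact: (allP hB) y hy.
Qed.

Lemma row0 k x s : 0 < k -> sorted geq (x :: s) ->
  count (fun j => (x - j) + cntg j s == k) (iota 0 x)
  = (k <= x + size s) && (x + size s - k \notin beta s).
Proof.
move=> hk hs; have ha := sorted_cons_all hs; have hs' := sorted_cons_tl hs.
set N := size s; set B := x + N.
pose g j := j + N - cntg j s.
have fa : forall j, j < x -> (x - j) + cntg j s + g j = B.
  move=> j hj; rewrite /g /B; have := cnt_le j s; rewrite -/N; lia.
have fb : forall j, j < x -> g j \notin beta s.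
  move=> j hj; apply/negP => /(nthP 0) [i]; rewrite size_beta => hi.
  rewrite nth_beta // -/N /g => heq.
  have hc := cnt_le j s; rewrite -/N in hc.
  have := cnt_nth j hs' i.
  case: (ltnP i (cntg j s)) => hic hn; lia.
have fc : injective g.
  move=> j j' heq; apply/eqP; rewrite eqn_leq; apply/andP; split; rewrite leqNgt; apply/negP => hlt.
    have := cnt_anti s (ltnW hlt); have := cnt_le j s; have := cnt_le j' s.
    move: heq; rewrite /g; lia.
  have := cnt_anti s (ltnW hlt); have := cnt_le j s; have := cnt_le j' s.
  move: heq; rewrite /g; lia.
pose gaps := [seq y <- iota 0 B | y \notin beta s].
have fd : size gaps = x.
  rewrite size_filter.
  have := count_predC (fun y => y \in beta s) (iota 0 B).
  rewrite count_mem_iota ?beta_uniq // ?size_beta ?size_iota; last first.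
    exact: beta_lt.
  rewrite -/N /B => h.
  rewrite -(@eq_count _ (predC (fun y => y \in beta s))) //; lia.
pose G := map g (iota 0 x).
have uG : uniq G by rewrite map_inj_uniq // iota_uniq.
have sG : {subset G <= gaps}.
  move=> y /mapP [j]; rewrite mem_iota add0n => /andP [_ hj] ->.
  rewrite mem_filter fb // mem_iota /= add0n; have := fa j hj; lia.
have hsz : size gaps <= size G by rewrite fd size_map size_iota.
have [_ eqG] := uniq_min_size uG sG hsz.
case: (leqP k B) => hkB /=.
  rewrite (@eq_in_count _ _ (fun j => g j == B - k)); last first.
    move=> j; rewrite mem_iota add0n => /andP [_ hj]; have := fa j hj.
    move=> h; apply/eqP/eqP; lia.
  rewrite -(count_map g (pred1 (B - k))) count_uniq_mem // eqG mem_filter mem_iota /=.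
  by rewrite (_ : B - k < 0 + B) ?andbT //; lia.
apply/eqP; rewrite -leqn0 leqNgt -has_count; apply/hasP => -[j]; rewrite mem_iota add0n => /andP [_ hj] /eqP.
have := fa j hj; lia.
Qed.

Lemma alpha_cons k x s : alpha k (x :: s) =
  count (fun j => (x - j) + cntg j s == k) (iota 0 x) + alpha k s.
Proof.
rewrite /alpha /= -add1n iotaDl -map_comp /=.
congr (_ + _).
  by apply: eq_count => j; rewrite /hook /= drop0.
Qed.

Lemma alpha_beta k l : 0 < k -> sorted geq l ->
  alpha k l = count (fun y => (k <= y) && (y - k \notin beta l)) (beta l).
Proof.
move=> hk; elim: l => [|x s IH] hs; first by [].
have ha := sorted_cons_all hs; have hs' := sorted_cons_tl hs.
rewrite alpha_cons row0 // IH //= !in_cons.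
have hlt := beta_lt ha.
congr (_ + _).
  case: (leqP k (x + size s)) => //= h.
  rewrite (_ : (x + size s - k == x + size s) = false) //; apply/negbTE; lia.
apply: eq_in_count => y hy /=; have := (allP hlt) y hy => h. rewrite in_cons.
rewrite (_ : (y - k == x + size s) = false) //; apply/negbTE; lia.
Qed.

Definition aB (k : nat) (B : seq nat) :=
  count (fun y => (k <= y) && (y - k \notin B)) B.

Lemma gtn_trans' : transitive gtn.
Proof. move=> a b c /= h1 h2; exact: ltn_trans h2 h1. Qed.

Lemma sgt_all x s : sorted gtn (x :: s) -> all (fun y => y < x) s.
Proof. move=> /= h; have := order_path_min gtn_trans' h. by []. Qed.

Lemma sgt_tl x s : sorted gtn (x :: s) -> sorted gtn s.
Proof. move=> /= h; exact: path_sorted h. Qed.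

Lemma aB1_cons x s : all (fun y => y < x) s ->
  aB 1 (x :: s) = ((1 <= x) && (x - 1 \notin s)) + aB 1 s.
Proof.
move=> ha; rewrite /aB /= !in_cons.
congr (_ + _).
  case: (leqP 1 x) => //= h; rewrite (_ : (x - 1 == x) = false) //; apply/negbTE; lia.
apply: eq_in_count => y hy /=; have := (allP ha) y hy => h; rewrite in_cons.
rewrite (_ : (y - 1 == x) = false) //; apply/negbTE; lia.
Qed.

Lemma P2a x s : sorted gtn (x :: s) -> size (x :: s) + aB 1 (x :: s) <= x.+1.
Proof.
elim: s x => [|y s IH] x hs.
  by rewrite /aB /=; lia.
have ha := sgt_all hs; have hs' := sgt_tl hs.
have hyx : y < x by move: ha => /= /andP [].
have hI := IH y hs'; rewrite aB1_cons // in_cons.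
have hys' := sgt_all hs'.
case: (eqVneq (x - 1) y) => [hy|hne] /=.
  rewrite andbF /=; move: hI => /=; lia.
case: (boolP (x - 1 \in s)) => hys; rewrite /=.
  rewrite andbF /=; move: hI => /=; lia.
have : y < x - 1 by lia.
move: hI => /=; case: (leqP 1 x) => h1 /=; lia.
Qed.

Lemma P2s s : sorted gtn s -> 'C(size s, 2) + 'C((aB 1 s).+1, 2) <= sumn s.
Proof.
elim: s => [|x s IH] hs; first by rewrite /aB.
have ha := sgt_all hs; have hs' := sgt_tl hs.
have h2 := P2a hs; move: h2.
rewrite aB1_cons // /=; have := IH hs'.
rewrite !binS !bin1.
case: ((1 <= x) && (x - 1 \notin s)) => /=; rewrite ?add0n ?add1n ?binS ?bin1; lia.
Qed.

Lemma aB_perm k s1 s2 : perm_eq s1 s2 -> aB k s1 = aB k s2.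
Proof.
move=> hp; rewrite /aB (permP hp); apply: eq_count => y /=.
by rewrite (perm_mem hp).
Qed.

Lemma P2u L : uniq L -> 'C(size L, 2) + 'C((aB 1 L).+1, 2) <= sumn L.
Proof.
move=> uL; have hp : perm_eq (sort geq L) L by rewrite perm_sort.
have hs : sorted gtn (sort geq L).
  rewrite gtn_sorted_uniq_geq sort_uniq uL /=; apply: sort_sorted.
  by move=> a b /=; apply: leq_total.
have := P2s hs; by rewrite (perm_size hp) (aB_perm _ hp) (perm_sumn hp).
Qed.

Lemma P1u L : uniq L -> 'C(size L, 2) <= sumn L.
Proof. move=> uL; have := P2u uL; lia. Qed.

Definition runner k (B : seq nat) r := [seq y %/ k | y <- B & y %% k == r].

Lemma divmodE k a r : r < k -> (r + k * a) %/ k = a /\ (r + k * a) %% k = r.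
Proof.
move=> hr; have hk : 0 < k by lia.
rewrite addnC mulnC divnMDl // modnMDl divn_small // modn_small //; by rewrite addn0.
Qed.

Lemma mem_runner k B r z : r < k -> (z \in runner k B r) = (r + k * z \in B).
Proof.
move=> hr; have [hd hm] := divmodE z hr.
apply/mapP/idP => [[w]|hin].
  rewrite mem_filter => /andP [/eqP hw hwB] ->.
  by rewrite -hw addnC mulnC -divn_eq.
by exists (r + k * z); rewrite // mem_filter hm eqxx.
Qed.

Lemma runner_uniq k B r : uniq B -> uniq (runner k B r).
Proof.
move=> uB; rewrite map_inj_in_uniq ?filter_uniq // => y w.
rewrite !mem_filter => /andP [/eqP hy _] /andP [/eqP hw _] heq.
by rewrite (divn_eq y k) (divn_eq w k) heq hy hw.
Qed.

Lemma sum_by_res k (F : nat -> nat) B : 0 < k ->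
  \sum_(y <- B) F y = \sum_(r < k) \sum_(y <- B | y %% k == r) F y.
Proof.
move=> hk; under [RHS]eq_bigr do rewrite big_mkcond.
rewrite exchange_big /=; apply: eq_bigr => y _.
rewrite (bigD1 (Ordinal (ltn_pmod y hk))) //= eqxx big1 ?addn0 // => i hi.
case: eqP => // h; case/eqP: hi; apply: val_inj => /=; by rewrite h.
Qed.

Lemma size_runners k B : 0 < k -> size B = \sum_(r < k) size (runner k B r).
Proof.
move=> hk; rewrite -sum1_size (sum_by_res _ _ hk); apply: eq_bigr => r _.
by rewrite size_map size_filter sum1_count.
Qed.

Lemma sumn_runners k B : 0 < k ->
  sumn B = \sum_(r < k) (r * size (runner k B r) + k * sumn (runner k B r)).
Proof.
move=> hk; rewrite sumnE (sum_by_res _ _ hk); apply: eq_bigr => r _.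
rewrite size_map size_filter sumnE big_map big_filter -sum1_count big_distrr /=.
rewrite big_distrr /= -big_split /=; apply: eq_bigr => y /eqP hy.
by rewrite muln1 {1}(divn_eq y k) hy mulnC addnC.
Qed.

Lemma aB_runners k B : 0 < k -> aB k B = \sum_(r < k) aB 1 (runner k B r).
Proof.
move=> hk; rewrite /aB -sumn_count sumnE big_map (sum_by_res _ _ hk).
apply: eq_bigr => r _.
rewrite -sumn_count sumnE big_map big_map big_filter.
apply: eq_bigr => y /eqP hy /=.
have hr : r < k by rewrite -hy ltn_pmod.
have hyE : y = r + k * (y %/ k) by rewrite {1}(divn_eq y k) hy mulnC addnC.
rewrite mem_runner // divn_gt0 //.
case: (leqP k y) => //= hky.
have -> : r + k * (y %/ k - 1) = y - k.
  have h1 : 0 < y %/ k by rewrite divn_gt0.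
  have h2 : k <= k * (y %/ k) by rewrite leq_pmulr.
  rewrite mulnBr muln1; move: hyE; lia.
by [].
Qed.

Definition build k N (L : nat -> seq nat) := [seq y <- iota 0 N | y %/ k \in L (y %% k)].

Lemma build_uniq k N L : uniq (build k N L).
Proof. exact: filter_uniq (iota_uniq 0 N). Qed.

Lemma runner_build k N L r : r < k -> uniq (L r) ->
  (forall z, z \in L r -> r + k * z < N) -> perm_eq (runner k (build k N L) r) (L r).
Proof.
move=> hr uL hN; apply: uniq_perm => //; first exact: runner_uniq (build_uniq _ _ _).
move=> z; rewrite mem_runner // mem_filter mem_iota add0n /=.
have [-> ->] := divmodE z hr.
by case hz: (z \in L r) => /=; rewrite ?andbF ?andbT //; apply: hN.
Qed.

Lemma sumn_iota n : sumn (iota 0 n) = 'C(n, 2).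
Proof. by rewrite -bin2_sum sumnE /index_iota subn0. Qed.

Lemma packed k (c : 'I_k -> nat) : 0 < k ->
  'C(\sum_(r < k) c r, 2) <= \sum_(r < k) (r * c r + k * 'C(c r, 2)).
Proof.
move=> hk.
pose cc (r : nat) := if insub r is Some i then c i else 0.
have ccE : forall i : 'I_k, cc i = c i by move=> i; rewrite /cc valK.
set S := \sum_(r < k) c r.
pose B := build k (k * S.+1) (fun r => iota 0 (cc r)).
have hp : forall i : 'I_k, perm_eq (runner k B i) (iota 0 (c i)).
  move=> i; rewrite -ccE; apply: runner_build => //; first exact: iota_uniq.
  move=> z; rewrite mem_iota add0n ccE => hz.
  have : c i <= S by rewrite /S (bigD1 i) //= leq_addr.
  have := ltn_ord i; nia.
have := P1u (build_uniq k (k * S.+1) (fun r => iota 0 (cc r))).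
rewrite -/B (size_runners _ hk) (sumn_runners _ hk).
rewrite (eq_bigr (fun r => c r)); last by move=> i _; rewrite (perm_size (hp i)) size_iota.
move=> h; apply: (leq_trans h); rewrite leq_eqVlt; apply/orP; left; apply/eqP.
apply: eq_bigr => i _; by rewrite (perm_size (hp i)) (perm_sumn (hp i)) size_iota sumn_iota.
Qed.

Lemma bin2x q : 2 * 'C(q.+1, 2) = q.+1 * q.
Proof. elim: q => // q IH; rewrite binS bin1 mulnDr IH; lia. Qed.

Lemma convex k (a : 'I_k -> nat) : 0 < k ->
  t (\sum_(r < k) a r) k <= k * \sum_(r < k) 'C((a r).+1, 2).
Proof.
move=> hk; set m := \sum_(r < k) a r; set q := m %/ k.
have per : forall x, 2 * q.+1 * x <= 2 * 'C(x.+1, 2) + q * q.+1.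
  move=> x; rewrite bin2x; case: (leqP x q) => h.
    have [d ->] : exists d, q = x + d by exists (q - x); lia.
    nia.
  have [d ->] : exists d, x = q.+1 + d by exists (x - q.+1); lia.
  nia.
have hs : 2 * q.+1 * m <= 2 * \sum_(r < k) 'C((a r).+1, 2) + k * (q * q.+1).
  have hc : \sum_(r < k) (q * q.+1) = k * (q * q.+1) by rewrite sum_nat_const card_ord.
  rewrite /m big_distrr /= big_distrr /= -hc -big_split /=.
  by apply: leq_sum => i _; apply: per.
have hqk : q * k <= m by rewrite /q leq_divM.
have hb := bin2x q.
rewrite /t -/q addn1.
move: hs hqk hb; nia.
Qed.

Lemma U2 k B : 0 < k -> uniq B -> t (aB k B) k + 'C(size B, 2) <= sumn B.
Proof.
move=> hk uB.
rewrite (aB_runners _ hk) (size_runners _ hk) (sumn_runners _ hk).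
have hc := packed (fun r : 'I_k => size (runner k B r)) hk.
have hv := convex (fun r : 'I_k => aB 1 (runner k B r)) hk.
have hm : \sum_(r < k) (r * size (runner k B r) + k * 'C(size (runner k B r), 2))
          + k * \sum_(r < k) 'C((aB 1 (runner k B r)).+1, 2)
          <= \sum_(r < k) (r * size (runner k B r) + k * sumn (runner k B r)).
  rewrite big_distrr /= -big_split /=; apply: leq_sum => i _.
  have := P2u (runner_uniq k i uB).
  rewrite -addnA -mulnDr leq_add2l => h; exact: leq_mul (leqnn k) h.
apply: leq_trans hm; rewrite addnC; exact: leq_add hc hv.
Qed.

Lemma tS k s : 0 < k -> t s.+1 k = t s k + k * (s %/ k).+1.
Proof.
move=> hk; set q := s %/ k; set r := s %% k.
have hr : r < k by rewrite ltn_pmod.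
have hs : s = r + k * q by rewrite /r /q {1}(divn_eq s k) mulnC addnC.
have hb := bin2x q.
have hC : 'C(q.+1, 2) <= q.+1 * q by lia.
have hY : 'C(q.+1, 2) * (k * k) <= (r + k * q) * q.+1 * k.
  have h1 : 'C(q.+1, 2) * (k * k) <= q.+1 * q * (k * k) by apply: leq_mul.
  apply: (leq_trans h1).
  have -> : q.+1 * q * (k * k) = (k * q) * q.+1 * k.
    nia.
  by apply: leq_mul => //; apply: leq_mul => //; apply: leq_addl.
rewrite /t -/q !addn1 -mulnn.
case: (ltnP r.+1 k) => h.
  have hq1 : s.+1 %/ k = q.
    rewrite {1}hs -addSn; by have [-> _] := divmodE q h.
  rewrite hq1 hs -addSn.
  have e1 : (r.+1 + k * q) * q.+1 * k = (r + k * q) * q.+1 * k + k * q.+1.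
    nia.
  rewrite e1; move: hY; lia.
have hr1 : r.+1 = k by lia.
have -> : s.+1 %/ k = q.+1.
  rewrite hs -addSn hr1 -{1}(muln1 k) -mulnDr mulKn //; lia.
rewrite hs -addSn hr1 binS bin1.
have e2 : (k + k * q) * q.+2 * k = (r + k * q) * q.+1 * k + k * q.+1 + (k + k * q) * k.
  rewrite -hr1; nia.
have e3 : ('C(q.+1, 2) + q.+1) * (k * k) = 'C(q.+1, 2) * (k * k) + (k + k * q) * k.
  nia.
rewrite e2 e3; move: hY; lia.
Qed.

Lemma t_mono k a b : 0 < k -> a <= b -> t a k <= t b k.
Proof.
move=> hk; elim: b => [|b IH]; first by rewrite leqn0 => /eqP ->.
rewrite leq_eqVlt => /orP [/eqP -> //|hab].
rewrite tS //; apply: leq_trans (IH hab) (leq_addr _ _).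
Qed.

Lemma t_lt k s : 0 < k -> t s k < t s.+1 k.
Proof. move=> hk; rewrite tS // -addn1 leq_add2l; by rewrite muln_gt0 hk. Qed.

Lemma part_bound k l : 0 < k -> sorted geq l -> t (alpha k l) k <= sumn l.
Proof.
move=> hk hs; have := U2 hk (beta_uniq hs).
have ha : alpha k l = aB k (beta l) by exact: alpha_beta.
by rewrite sumn_beta size_beta leq_add2r ha.
Qed.

Lemma sum_ind_lt k r (f : nat -> nat) : r <= k ->
  \sum_(i < k) (i < r) * f i = \sum_(i < r) f i.
Proof.
move=> hrk; rewrite (eq_bigr (fun i : 'I_k => if i < r then f i else 0)); last first.
  by move=> i _; case: (i < r); rewrite ?mul1n ?mul0n.
by rewrite -big_mkcond (big_ord_narrow hrk).
Qed.

Lemma sum_ind_eq k e (f : nat -> nat) : e < k ->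
  \sum_(i < k) ((i : nat) == e) * f i = f e.
Proof.
move=> he; rewrite (bigD1 (Ordinal he)) //= eqxx mul1n big1 ?addn0 // => i hi.
case: eqP => // h; case/eqP: hi; apply: val_inj => /=; by rewrite h.
Qed.

Lemma sum_ord_id n : \sum_(i < n) i = 'C(n, 2).
Proof. by rewrite -bin2_sum big_mkord. Qed.

Lemma sum_ord_const n c : \sum_(i < n) c = n * c.
Proof. by rewrite sum_nat_const card_ord. Qed.

Lemma sum_map_double s : sumn [seq 2 * i | i <- s] = 2 * sumn s.
Proof. elim: s => //= x s ->; lia. Qed.

Lemma sum_odd a : sumn [seq (2 * i).+1 | i <- iota 0 a] = a * a.
Proof.
elim: a => // a IH.
have -> : iota 0 a.+1 = iota 0 a ++ [:: a] by rewrite -addn1 iotaD.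
rewrite map_cat sumn_cat IH /=; lia.
Qed.

Lemma bin2sq a : 2 * 'C(a, 2) + a = a * a.
Proof. case: a => // a; rewrite bin2x; lia. Qed.

Lemma sub_in_count (a1 a2 : pred nat) s :
  (forall z, z \in s -> a1 z -> a2 z) -> count a1 s <= count a2 s.
Proof.
elim: s => //= x s IH h.
have h1 : count a1 s <= count a2 s by apply: IH => z hz; apply: h; rewrite in_cons hz orbT.
case h1x: (a1 x); last by rewrite add0n; apply: leq_trans h1 (leq_addl _ _).
by rewrite (h x (mem_head _ _) h1x) /= ltnS.
Qed.

Section Family.
Variables (k q r d j : nat).
Hypotheses (hk : 0 < k) (hr : r < k) (hd : d < k).

Definition fe := (r + d) %% k.
Definition fa (i : nat) := q + (i < r).
Definition fL (i : nat) : seq nat :=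
  if i == fe then rcons [seq 2 * x | x <- iota 0 (fa i)] ((fa i).*2 + j)
  else [seq (2 * x).+1 | x <- iota 0 (fa i)].
Definition fN := k * (2 * q + j + 3).
Definition fB := build k fN fL.

Lemma fe_lt : fe < k.
Proof. by rewrite /fe ltn_pmod. Qed.

Lemma fL_uniq i : uniq (fL i).
Proof.
rewrite /fL; case: (i == fe).
  rewrite rcons_uniq map_inj_uniq ?iota_uniq ?andbT; last by move=> x y /eqP; lia.
  apply/negP => /mapP [x]; rewrite mem_iota => /andP [_ hx]; lia.
rewrite map_inj_uniq ?iota_uniq //; move=> x y /eqP; lia.
Qed.

Lemma fL_bound i z : z \in fL i -> z <= 2 * q + 2 + j.
Proof.
rewrite /fL /fa; case: (i == fe).
  rewrite mem_rcons in_cons => /orP [/eqP ->|/mapP [x]]; first by case: (i < r) => /=; lia.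
  rewrite mem_iota => /andP [_ hx] ->; case: (i < r) hx => /=; lia.
move=> /mapP [x]; rewrite mem_iota => /andP [_ hx] ->; case: (i < r) hx => /=; lia.
Qed.

Lemma fL_size i : size (fL i) = fa i + (i == fe).
Proof.
by rewrite /fL; case: (i == fe); rewrite ?size_rcons size_map size_iota ?addn1 ?addn0.
Qed.

Lemma fL_sumn i : sumn (fL i) = fa i * fa i + ((i : nat) == fe) * (fa i + j).
Proof.
rewrite /fL; case: (i == fe); last by rewrite sum_odd mul0n addn0.
rewrite -cats1 sumn_cat sum_map_double sumn_iota /= mul1n.
have := bin2sq (fa i); lia.
Qed.

Lemma fL_aB i : fa i <= aB 1 (fL i).
Proof.
set P := (fun y => (1 <= y) && (y - 1 \notin fL i)).
have hc := count_predC P (fL i).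
have hz : count (predC P) (fL i) <= count (pred1 0) (fL i).
  apply: sub_in_count => z hz /=; apply: contraR => hz0.
  have hz1 : 1 <= z by lia.
  rewrite /P hz1 /=; move: hz; rewrite /fL.
  case: (i == fe).
    rewrite !mem_rcons !in_cons => /orP [/eqP hzE|/mapP [x]].
      rewrite hzE in hz1 *.
      apply/negP => /orP [/eqP|/mapP [y]]; first by lia.
      rewrite mem_iota => /andP [_ hy] heq; lia.
    rewrite mem_iota => /andP [_ hx] hzE.
    rewrite hzE in hz1 *.
    apply/negP => /orP [/eqP|/mapP [y]]; first by lia.
    move=> _ heq; lia.
  move=> /mapP [x] _ hzE; rewrite hzE; apply/negP => /mapP [y] _ heq; lia.
have h0 : count (pred1 0) (fL i) <= (i == fe).
  move: (fL_uniq i); rewrite /fL; case: (i == fe) => hu.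
    by rewrite count_uniq_mem // leq_b1.
  rewrite leqn0; apply/eqP/count_memPn; apply/negP => /mapP [x] _; lia.
rewrite /aB -/P; move: hc hz h0; rewrite fL_size; lia.
Qed.

Lemma fB_runner (i : 'I_k) : perm_eq (runner k fB i) (fL i).
Proof.
apply: runner_build => //; first exact: fL_uniq.
move=> z /fL_bound hz.
have h2 : fN = k * (2 * q + 2 + j) + k.
  by rewrite /fN -mulnSr; congr (_ * _); lia.
have h1 : k * z <= k * (2 * q + 2 + j) by apply: leq_mul.
have := ltn_ord i; rewrite h2; lia.
Qed.

Lemma fB_size : size fB = q * k + r + 1.
Proof.
rewrite (size_runners _ hk) (eq_bigr (fun i : 'I_k => fa i + ((i : nat) == fe))); last first.
  by move=> i _; rewrite (perm_size (fB_runner i)) fL_size.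
rewrite big_split /= (eq_bigr (fun i : 'I_k => q + (i < r) * 1)); last by move=> i _; rewrite muln1.
rewrite big_split /= (sum_ind_lt (fun _ => 1) (ltnW hr)) sum_ord_const sum_ord_const.
rewrite (eq_bigr (fun i : 'I_k => ((i : nat) == fe) * 1)); last by move=> i _; rewrite muln1.
by rewrite (sum_ind_eq (fun _ => 1) fe_lt) [k * q]mulnC !muln1.
Qed.

Lemma fB_aB : q * k + r <= aB k fB.
Proof.
rewrite (aB_runners _ hk).
apply: (@leq_trans (\sum_(i < k) fa i)).
  rewrite (eq_bigr (fun i : 'I_k => q + (i < r) * 1)); last by move=> i _; rewrite muln1.
  by rewrite big_split /= (sum_ind_lt (fun _ => 1) (ltnW hr)) sum_ord_const sum_ord_const [k * q]mulnC !muln1.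
apply: leq_sum => i _; rewrite (aB_perm _ (fB_runner i)); exact: fL_aB.
Qed.

Lemma fB_sumn : sumn fB = q * 'C(k, 2) + 'C(r, 2) + fe
   + k * (k * (q * q) + (2 * q + 1) * r) + k * (fa fe + j).
Proof.
rewrite (sumn_runners _ hk).
rewrite (eq_bigr (fun i : 'I_k => (q * i + (i < r) * i) + ((i : nat) == fe) * i +
    (k * (q * q) + (i < r) * (k * (2 * q + 1))) + ((i : nat) == fe) * (k * (fa i + j)))); last first.
  move=> i _; rewrite (perm_size (fB_runner i)) (perm_sumn (fB_runner i)) fL_size fL_sumn /fa.
  case: ((i : nat) < r); case: ((i : nat) == fe) => /=; ring.
rewrite !big_split /= (sum_ind_eq (fun x => x) fe_lt) (sum_ind_eq (fun x => k * (fa x + j)) fe_lt).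
rewrite (sum_ind_lt (fun x => x) (ltnW hr)) (sum_ind_lt (fun _ => k * (2 * q + 1)) (ltnW hr)) -big_distrr /= sum_ord_id sum_ord_id.
rewrite sum_ord_const (@sum_ord_const r); nia.
Qed.

End Family.

Fixpoint unbeta (b : seq nat) : seq nat :=
  if b is y :: b' then (y - size b') :: unbeta b' else [::].

Lemma size_unbeta b : size (unbeta b) = size b.
Proof. by elim: b => //= y b ->. Qed.

Lemma sgt_size y b : sorted gtn (y :: b) -> size b <= y.
Proof.
elim: b y => //= z b IH y /andP [hzy hp].
have := IH z hp; lia.
Qed.

Lemma beta_unbeta b : sorted gtn b -> beta (unbeta b) = b.
Proof.
elim: b => //= y b IH hs; rewrite size_unbeta IH; last exact: sgt_tl hs.
by rewrite subnK // sgt_size.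
Qed.

Lemma unbeta_sorted b : sorted gtn b -> sorted geq (unbeta b).
Proof.
elim: b => // y [|z b] IH hs //=.
have hs' := sgt_tl hs; have := IH hs'; rewrite /= => ->; rewrite andbT.
have := sgt_size hs'; move: hs => /= /andP [hzy _]; lia.
Qed.

Lemma alpha_filter k l : alpha k [seq x <- l | 0 < x] = alpha k l.
Proof.
elim: l => [|x l IH] //=.
case: (posnP x) => [->|hx] /=.
  by rewrite alpha_cons /= IH.
rewrite !alpha_cons IH; congr (_ + _); apply: eq_count => j /=.
rewrite /cntg count_filter; congr (_ + _ == _); apply: eq_count => y /=; lia.
Qed.

Lemma sumn_filter_pos l : sumn [seq x <- l | 0 < x] = sumn l.
Proof. elim: l => //= x l IH; case: (posnP x) => [->|hx] //=; by rewrite IH. Qed.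

Lemma construct k m n : 0 < k -> t m k <= n ->
  exists l, [/\ is_partition l, sumn l = n & m <= alpha k l].
Proof.
move=> hk htn.
set q := m %/ k; set r := m %% k; set D := n - t m k; set d := D %% k; set j := D %/ k.
have hr : r < k by rewrite ltn_pmod.
have hd : d < k by rewrite ltn_pmod.
have hm : m = q * k + r by rewrite /q /r -divn_eq.
have hD : D = j * k + d by rewrite /j /d -divn_eq.
set B := fB k q r d j.
have uB : uniq B by exact: build_uniq.
have hsz : size B = m.+1 by rewrite fB_size // hm addn1.
have haB : m <= aB k B by rewrite hm; exact: fB_aB.
have hsum : sumn B = n + 'C(m.+1, 2).
  rewrite fB_sumn //.
  have he : fe k r d + k * (fe k r d < r) = r + d.
    rewrite /fe; case: (ltnP (r + d) k) => h.
      by rewrite modn_small // (_ : r + d < r = false) ?muln0 ?addn0 //; lia.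
    have [_ hmod] := @divmodE k 1 (r + d - k) (ltac:(lia)).
    rewrite (_ : r + d - k + k * 1 = r + d) in hmod; last by lia.
    rewrite hmod (_ : r + d - k < r = true); last by lia.
    lia.
  rewrite /fa.
  have -> : q * 'C(k, 2) + 'C(r, 2) + fe k r d + k * (k * (q * q) + (2 * q + 1) * r) + k * (q + (fe k r d < r) + j)
      = q * 'C(k, 2) + 'C(r, 2) + (fe k r d + k * (fe k r d < r)) + k * (k * (q * q) + (2 * q + 1) * r) + k * (q + j).
    ring.
  rewrite he.
  have hq : m %/ k = q by [].
  set Cq := 'C(q.+1, 2).
  have ht : t m k = m * q.+1 * k - Cq * k ^ 2 by rewrite /t -/q addn1.
  have hCq : 2 * Cq = q.+1 * q by exact: bin2x.
  have hCm : 2 * 'C(m.+1, 2) = m.+1 * m by exact: bin2x.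
  have hX : Cq * k ^ 2 <= m * q.+1 * k.
    have h1 : 2 * (Cq * k ^ 2) = q.+1 * (q * k) * k.
      by rewrite mulnA hCq; ring.
    have h2 : q.+1 * (q * k) * k <= q.+1 * m * k.
      by apply: leq_mul => //; apply: leq_mul => //; rewrite hm leq_addr.
    have h3 : q.+1 * m * k = m * q.+1 * k by ring.
    lia.
  suff E : q * 'C(k, 2) + 'C(r, 2) + (r + d) + k * (k * (q * q) + (2 * q + 1) * r)
            + k * (q + j) + Cq * k ^ 2 = m * q.+1 * k + d + k * j + 'C(m.+1, 2).
    rewrite /D in hD; move: E hX hD htn ht; rewrite [j * k]mulnC; lia.
  apply/eqP; rewrite -(eqn_pmul2l (isT : 0 < 2)); apply/eqP.
  have hCk : 2 * 'C(k, 2) + k = k * k by exact: bin2sq.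
  have hCr : 2 * 'C(r, 2) + r = r * r by exact: bin2sq.
  have e1 : 2 * (q * 'C(k, 2) + 'C(r, 2) + (r + d) + k * (k * (q * q) + (2 * q + 1) * r)
            + k * (q + j) + Cq * k ^ 2)
          = q * (2 * 'C(k, 2) + k) + (2 * 'C(r, 2) + r) + r + 2 * d
            + 2 * k * (k * (q * q) + (2 * q + 1) * r) + 2 * k * j + (2 * Cq) * k ^ 2 + q * k.
    ring.
  have e2 : 2 * (m * q.+1 * k + d + k * j + 'C(m.+1, 2))
          = 2 * m * q.+1 * k + 2 * d + 2 * k * j + 2 * 'C(m.+1, 2).
    ring.
  rewrite e1 e2 hCk hCr hCq hCm hm; ring.
set b := sort geq B.
have hpb : perm_eq b B by rewrite perm_sort.
have sb : sorted gtn b.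
  rewrite gtn_sorted_uniq_geq sort_uniq uB /=; apply: sort_sorted.
  by move=> x y /=; rewrite orbC leq_total.
set l0 := unbeta b.
have hb : beta l0 = b by exact: beta_unbeta.
have sl0 : sorted geq l0 by exact: unbeta_sorted.
exists [seq x <- l0 | 0 < x]; split.
- rewrite /is_partition (sorted_filter geq_trans') //=.
  by apply/allP => x; rewrite mem_filter => /andP [].
- rewrite sumn_filter_pos.
  have := sumn_beta l0; rewrite hb (perm_sumn hpb) hsum size_unbeta (perm_size hpb) hsz; lia.
- rewrite alpha_filter (alpha_beta hk sl0) hb.
  have -> : count (fun y => (k <= y) && (y - k \notin b)) b = aB k b by [].
  by rewrite (aB_perm _ hpb).
Qed.

Lemma le_sumn x l : x \in l -> x <= sumn l.
Proof.
elim: l => //= y l IH; rewrite in_cons => /orP [/eqP ->|h]; first exact: leq_addr.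
by apply: leq_trans (IH h) (leq_addl _ _).
Qed.

Lemma size_le_sumn l : all (fun r => 0 < r) l -> size l <= sumn l.
Proof. elim: l => //= x l IH /andP [hx hl]; have := IH hl; lia. Qed.

Lemma encode n l : is_partition l -> sumn l = n ->
  exists f : {ffun 'I_n -> 'I_n.+1}, seq_of_ffun f = l.
Proof.
move=> /andP [hs hp] hsum.
exists [ffun i : 'I_n => (inord (nth 0 l i) : 'I_n.+1)].
rewrite /seq_of_ffun.
have -> : [seq nat_of_ord ([ffun i : 'I_n => (inord (nth 0 l i) : 'I_n.+1)] i) | i <- enum 'I_n]
        = [seq nth 0 l x | x <- iota 0 n].
  rewrite -val_enum_ord -map_comp; apply: eq_map => i /=; rewrite ffunE inordK //.
  case: (ltnP i (size l)) => hi; last by rewrite nth_default.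
  rewrite ltnS; apply: leq_trans (le_sumn (mem_nth 0 hi)) _; by rewrite hsum.
have hsz : size l <= n by rewrite -hsum size_le_sumn.
rewrite -(subnKC hsz) iotaD map_cat filter_cat.
have -> : [seq nth 0 l x | x <- iota 0 (size l)] = l by rewrite -/(mkseq _ _) mkseq_nth.
rewrite (all_filterP hp).
have -> : [seq x <- [seq nth 0 l x | x <- iota (0 + size l) (n - size l)] | 0 < x] = [::].
  apply/eqP; rewrite -size_eq0 size_filter -leqn0 leqNgt -has_count.
  apply/hasP => -[x /mapP [y]]; rewrite mem_iota add0n => /andP [hy _] -> /=.
  by rewrite nth_default.
by rewrite cats0.
Qed.

Theorem theorem4p1 (m k n : nat) :
  1 <= k -> t m k <= n -> n <= t m.+1 k - 1 -> b n k = m.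
Proof.
move=> hk htn hnt.
apply/eqP; rewrite eqn_leq; apply/andP; split.
  apply/bigmax_leqP => f /andP [/andP [hs _] /eqP hsum].
  have := part_bound hk hs; rewrite hsum => h.
  rewrite leqNgt; apply/negP => hlt.
  have h1 := t_mono hk hlt.
  have h2 := t_lt m hk.
  lia.
have [l [hp hsum ha]] := construct hk htn.
have [f hf] := encode hp hsum.
apply: leq_trans ha _; rewrite -hf.
apply: (leq_bigmax_cond (P := fun f => partition_of n (seq_of_ffun f))).
by rewrite /partition_of hf hp hsum eqxx.
Qed.
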